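(* Let $\mathcal{T}$ be the scheme on $\mathcal{M}$ given by $$\mathcal{T}(\mathbf{p})_{2i}=M_{1/2}\big(M_{3/4}(p_{i-1},p_i),\,M_{1/4}(p_i,p_{i+1})\big),\qquad \mathcal{T}(\mathbf{p})_{2i+1}=M_{1/2}(p_i,p_{i+1}),\quad i\in\mathbb{Z}.$$ Then $\delta(\mathcal{T}(\mathbf{p}))\le\tfrac12\,\delta(\mathbf{p})$ for all manifold data $\mathbf{p}$, and $\mathcal{T}$ is convergent.
   Context: $\mathcal{M}$ is a geodesically complete connected Riemannian manifold with distance $d$. For $p_0,p_1\in\mathcal{M}$ a minimal geodesic $\gamma:[0,1]\to\mathcal{M}$ from $p_0$ to $p_1$ is fixed and $M_t(p_0,p_1)=\gamma(t)$, $t\in[0,1]$, so all $M_t(p_0,p_1)$ lie on the same geodesic and $d(M_s(p_0,p_1),M_t(p_0,p_1))=|s-t|d(p_0,p_1)$. Data $\mathbf{p}=(p_i)_{i\in\mathbb{Z}}$ with $\delta(\mathbf{p})=\sup_id(p_i,p_{i+1})<\infty$. This is the adaptation via the symmetric geodesic inductive mean of the linear cubic B-spline scheme with mask $\frac18(1,4,6,4,1)$. Convergence: for every data $\mathbf{p}$ the curves $\mathrm{PG}_k(\mathcal{T}^k(\mathbf{p}))$ converge uniformly on $\mathbb{R}$, where $\mathrm{PG}_k(\mathbf{q})(t)=M_{2^kt-n}(q_n,q_{n+1})$ for $t\in[2^{-k}n,2^{-k}(n+1))$. *)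

(* Defs.v *)
From Stdlib Require Import Reals Lra ZArith.
Open Scope R_scope.

(* Abstract setting: (X,d) is the metric space of a geodesically complete
   connected Riemannian manifold; by Hopf-Rinow it is a complete metric space.
   M t p0 p1 is the point gamma(t) of a fixed minimal geodesic
   gamma : [0,1] -> X from p0 to p1. *)
Record geodesic_mean_space (X : Type) (d : X -> X -> R) (M : R -> X -> X -> X)
  : Prop := {
  gms_nonneg : forall x y, 0 <= d x y;
  gms_sep : forall x y, d x y = 0 <-> x = y;
  gms_sym : forall x y, d x y = d y x;
  gms_tri : forall x y z, d x z <= d x y + d y z;
  gms_complete : forall u : nat -> X,
      (forall eps, 0 < eps -> exists N, forall m n, (N <= m)%nat -> (N <= n)%nat ->
          d (u m) (u n) < eps) ->
      exists l, forall eps, 0 < eps -> exists N, forall n, (N <= n)%nat -> d (u n) l < eps;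
  gms_M0 : forall p q, M 0 p q = p;
  gms_M1 : forall p q, M 1 p q = q;
  gms_geod : forall p q s t, 0 <= s <= 1 -> 0 <= t <= 1 ->
      d (M s p q) (M t p q) = Rabs (s - t) * d p q
}.

Definition consec_dists {X : Type} (d : X -> X -> R) (p : Z -> X) : R -> Prop :=
  fun r => exists i : Z, r = d (p i) (p (i + 1)%Z).

Definition is_delta {X : Type} (d : X -> X -> R) (p : Z -> X) (D : R) : Prop :=
  is_lub (consec_dists d p) D.

Definition bounded_data {X : Type} (d : X -> X -> R) (p : Z -> X) : Prop :=
  exists B, forall i : Z, d (p i) (p (i + 1)%Z) <= B.

(* The scheme T (j / 2 is floor division on Z) *)
Definition schemeT {X : Type} (M : R -> X -> X -> X) (p : Z -> X) : Z -> X :=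
  fun j => let i := (j / 2)%Z in
    if Z.even j
    then M (1/2) (M (3/4) (p (i - 1)%Z) (p i)) (M (1/4) (p i) (p (i + 1)%Z))
    else M (1/2) (p i) (p (i + 1)%Z).

Definition PG {X : Type} (M : R -> X -> X -> X) (k : nat) (q : Z -> X) (t : R) : X :=
  let n := Int_part (2 ^ k * t) in
  M (2 ^ k * t - IZR n) (q n) (q (n + 1)%Z).

(* Main.v *)
Require Import Defs.
From Stdlib Require Import Reals ZArith Lra Lia ClassicalEpsilon.
Open Scope R_scope.
Ltac zlia := try Z.to_euclidean_division_equations; lia.

Lemma d_Mp X d M (HX : geodesic_mean_space X d M) p q s :
  0 <= s <= 1 -> d (M s p q) p = s * d p q.
Proof.
  intros Hs. assert (H := gms_geod _ _ _ HX p q s 0 Hs ltac:(lra)).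
  rewrite (gms_M0 _ _ _ HX) in H. rewrite H, Rminus_0_r, Rabs_pos_eq; lra.
Qed.

Lemma d_Mq X d M (HX : geodesic_mean_space X d M) p q s :
  0 <= s <= 1 -> d (M s p q) q = (1 - s) * d p q.
Proof.
  intros Hs. assert (H := gms_geod _ _ _ HX p q s 1 Hs ltac:(lra)).
  rewrite (gms_M1 _ _ _ HX) in H. rewrite H, Rabs_minus_sym, Rabs_pos_eq; lra.
Qed.

Lemma T_even X (M : R -> X -> X -> X) q i :
  schemeT M q (2*i)%Z = M (1/2) (M (3/4) (q (i-1)%Z) (q i)) (M (1/4) (q i) (q (i+1)%Z)).
Proof.
  unfold schemeT. replace ((2*i)/2)%Z with i by zlia.
  rewrite Z.even_mul. reflexivity.
Qed.

Lemma T_odd X (M : R -> X -> X -> X) q i :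
  schemeT M q (2*i+1)%Z = M (1/2) (q i) (q (i+1)%Z).
Proof.
  unfold schemeT. replace ((2*i+1)/2)%Z with i by zlia.
  rewrite Z.even_add, Z.even_mul. reflexivity.
Qed.

Lemma step X d M (HX : geodesic_mean_space X d M) q B :
  (forall i, d (q i) (q (i+1)%Z) <= B) ->
  forall j, d (schemeT M q j) (schemeT M q (j+1)%Z) <= B/2.
Proof.
  intros HB j.
  assert (Hn : forall x y, 0 <= d x y) by apply (gms_nonneg _ _ _ HX).
  assert (Hsym : forall x y, d x y = d y x) by apply (gms_sym _ _ _ HX).
  assert (Htri : forall x y z, d x z <= d x y + d y z) by apply (gms_tri _ _ _ HX).
  destruct (ltac:(exists (j/2)%Z; zlia) : exists i, (j = 2*i \/ j = 2*i+1)%Z) as [i [-> | ->]].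
  - rewrite T_even, T_odd.
    set (a := M (3/4) (q (i-1)%Z) (q i)). set (b := M (1/4) (q i) (q (i+1)%Z)).
    assert (H1 : d (M (1/2) a b) b = (1 - 1/2) * d a b) by (apply d_Mq; auto; lra).
    assert (H2 : d b (M (1/2) (q i) (q (i+1)%Z)) = Rabs (1/4 - 1/2) * d (q i) (q (i+1)%Z))
      by (apply (gms_geod _ _ _ HX); lra).
    rewrite Rabs_left1 in H2 by lra.
    assert (H3 : d a (q i) = (1 - 3/4) * d (q (i-1)%Z) (q i)) by (apply d_Mq; auto; lra).
    assert (H4 : d b (q i) = 1/4 * d (q i) (q (i+1)%Z)) by (apply d_Mp; auto; lra).
    assert (H5 := HB (i-1)%Z). rewrite Z.sub_add in H5.
    assert (H6 := HB i).
    assert (T1 := Htri (M (1/2) a b) b (M (1/2) (q i) (q (i+1)%Z))).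
    assert (T2 := Htri a (q i) b). rewrite (Hsym (q i) b) in T2.
    lra.
  - rewrite T_odd. replace (2*i+1+1)%Z with (2*(i+1))%Z by ring. rewrite T_even.
    replace (i+1-1)%Z with i by ring.
    set (a := M (3/4) (q i) (q (i+1)%Z)). set (b := M (1/4) (q (i+1)%Z) (q (i+1+1)%Z)).
    set (mid := M (1/2) (q i) (q (i+1)%Z)).
    assert (H1 : d mid a = Rabs (1/2 - 3/4) * d (q i) (q (i+1)%Z))
      by (apply (gms_geod _ _ _ HX); lra).
    rewrite Rabs_left1 in H1 by lra.
    assert (H2 : d (M (1/2) a b) a = 1/2 * d a b) by (apply d_Mp; auto; lra).
    assert (H3 : d a (q (i+1)%Z) = (1 - 3/4) * d (q i) (q (i+1)%Z)) by (apply d_Mq; auto; lra).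
    assert (H4 : d b (q (i+1)%Z) = 1/4 * d (q (i+1)%Z) (q (i+1+1)%Z)) by (apply d_Mp; auto; lra).
    assert (H5 := HB (i+1)%Z). assert (H6 := HB i).
    assert (T1 := Htri mid a (M (1/2) a b)). rewrite (Hsym a (M (1/2) a b)) in T1.
    assert (T2 := Htri a (q (i+1)%Z) b). rewrite (Hsym (q (i+1)%Z) b) in T2.
    lra.
Qed.

Lemma Tnear X d M (HX : geodesic_mean_space X d M) q C :
  (forall i, d (q i) (q (i+1)%Z) <= C) ->
  forall j, d (schemeT M q j) (q (j/2)%Z) <= C.
Proof.
  intros HB j.
  assert (Hn : forall x y, 0 <= d x y) by apply (gms_nonneg _ _ _ HX).
  assert (Hsym : forall x y, d x y = d y x) by apply (gms_sym _ _ _ HX).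
  assert (Htri : forall x y z, d x z <= d x y + d y z) by apply (gms_tri _ _ _ HX).
  destruct (ltac:(exists (j/2)%Z; zlia) : exists i, (j = 2*i \/ j = 2*i+1)%Z) as [i [-> | ->]].
  - rewrite T_even. replace (2*i/2)%Z with i by zlia.
    set (a := M (3/4) (q (i-1)%Z) (q i)). set (b := M (1/4) (q i) (q (i+1)%Z)).
    assert (H1 : d (M (1/2) a b) b = (1 - 1/2) * d a b) by (apply d_Mq; auto; lra).
    assert (H3 : d a (q i) = (1 - 3/4) * d (q (i-1)%Z) (q i)) by (apply d_Mq; auto; lra).
    assert (H4 : d b (q i) = 1/4 * d (q i) (q (i+1)%Z)) by (apply d_Mp; auto; lra).
    assert (H5 := HB (i-1)%Z). rewrite Z.sub_add in H5.
    assert (H6 := HB i).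
    assert (T1 := Htri (M (1/2) a b) b (q i)).
    assert (T2 := Htri a (q i) b). rewrite (Hsym (q i) b) in T2.
    assert (H7 := Hn (q i) (q (i+1)%Z)). assert (H8 := Hn a b).
    lra.
  - rewrite T_odd. replace ((2*i+1)/2)%Z with i by zlia.
    rewrite d_Mp by (auto; lra). assert (H6 := HB i). assert (H7 := Hn (q i) (q (i+1)%Z)). lra.
Qed.

Lemma PGnear X d M (HX : geodesic_mean_space X d M) q C :
  (forall i, d (q i) (q (i+1)%Z) <= C) ->
  forall k t, d (PG M k q t) (q (Int_part (2^k * t))) <= C.
Proof.
  intros HB k t. unfold PG. set (x := 2^k*t).
  destruct (base_Int_part x) as [H1 H2].
  rewrite d_Mp by (auto; lra).
  assert (H6 := HB (Int_part x)). assert (H7 := gms_nonneg _ _ _ HX (q (Int_part x)) (q (Int_part x + 1)%Z)).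
  nra.
Qed.

Lemma ip2 x : Int_part (2*x) = (2*Int_part x)%Z \/ Int_part (2*x) = (2*Int_part x+1)%Z.
Proof.
  destruct (base_Int_part x) as [H1 H2]. destruct (base_Int_part (2*x)) as [H3 H4].
  assert (A : (2 * Int_part x < Int_part (2*x) + 1)%Z).
  { apply lt_IZR. rewrite plus_IZR, mult_IZR. simpl. lra. }
  assert (B : (Int_part (2*x) < 2 * Int_part x + 2)%Z).
  { apply lt_IZR. rewrite plus_IZR, mult_IZR. simpl. lra. }
  zlia.
Qed.

Lemma PGstep X d M (HX : geodesic_mean_space X d M) q C :
  (forall i, d (q i) (q (i+1)%Z) <= C) ->
  forall k t, d (PG M (S k) (schemeT M q) t) (PG M k q t) <= 3 * C.
Proof.
  intros HB k t.
  assert (Hn : forall x y, 0 <= d x y) by apply (gms_nonneg _ _ _ HX).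
  assert (Hsym : forall x y, d x y = d y x) by apply (gms_sym _ _ _ HX).
  assert (Htri : forall x y z, d x z <= d x y + d y z) by apply (gms_tri _ _ _ HX).
  assert (C0 : 0 <= C) by (apply Rle_trans with (2 := HB 0%Z); auto).
  assert (E1 := PGnear _ _ _ HX _ _ (step _ _ _ HX q C HB) (S k) t).
  assert (E2 := PGnear _ _ _ HX _ _ HB k t).
  assert (E3 := Tnear _ _ _ HX _ _ HB (Int_part (2 ^ S k * t))).
  replace (Int_part (2 ^ S k * t) / 2)%Z with (Int_part (2^k*t)) in E3.
  2:{ replace (2 ^ S k * t) with (2 * (2^k*t)) by (simpl; ring).
      destruct (ip2 (2^k*t)) as [-> | ->]; zlia. }
  set (A := PG M (S k) (schemeT M q) t) in *.
  set (Bp := PG M k q t) in *.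
  set (m := schemeT M q (Int_part (2 ^ S k * t))) in *.
  set (n := q (Int_part (2 ^ k * t))) in *.
  assert (T1 := Htri A m Bp). assert (T2 := Htri m n Bp). rewrite (Hsym n Bp) in T2.
  lra.
Qed.

Lemma iter_bound X d M (HX : geodesic_mean_space X d M) p B :
  (forall i, d (p i) (p (i+1)%Z) <= B) ->
  forall k i, d (Nat.iter k (schemeT M) p i) (Nat.iter k (schemeT M) p (i+1)%Z) <= B * (/2)^k.
Proof.
  intros HB k. induction k as [|k IH]; intros i.
  - simpl. rewrite Rmult_1_r. apply HB.
  - change (Nat.iter (S k) (schemeT M) p) with (schemeT M (Nat.iter k (schemeT M) p)).
    replace (B * (/2)^S k) with (B * (/2)^k / 2) by (simpl; field).
    apply (step _ _ _ HX). exact IH.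
Qed.

Lemma small B : 0 <= B -> forall eps, 0 < eps -> exists N, forall n, (N <= n)%nat -> 6 * B * (/2)^n < eps.
Proof.
  intros B0 eps He.
  assert (Hy : 0 < eps / (6*B+1)) by (apply Rdiv_lt_0_compat; lra).
  destruct (pow_lt_1_zero (/2) ltac:(rewrite Rabs_pos_eq; lra) _ Hy) as [N HN].
  exists N. intros n Hn. specialize (HN n Hn).
  assert (P : 0 <= (/2)^n) by (apply pow_le; lra).
  rewrite Rabs_pos_eq in HN by exact P.
  assert (E : (6*B+1) * (eps / (6*B+1)) = eps) by (field; lra).
  nra.
Qed.

Theorem mainTheorem10 (X : Type) (d : X -> X -> R) (M : R -> X -> X -> X)
  (HX : geodesic_mean_space X d M) :
  (forall (p : Z -> X) (D : R), bounded_data d p -> is_delta d p D ->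
     exists D' : R, is_delta d (schemeT M p) D' /\ D' <= D / 2)
  /\
  (forall p : Z -> X, bounded_data d p ->
     exists f : R -> X, forall eps : R, 0 < eps ->
       exists K : nat, forall k : nat, (K <= k)%nat -> forall t : R,
         d (PG M k (Nat.iter k (schemeT M) p) t) (f t) < eps).
Proof.
  assert (Hn : forall x y, 0 <= d x y) by apply (gms_nonneg _ _ _ HX).
  assert (Hsym : forall x y, d x y = d y x) by apply (gms_sym _ _ _ HX).
  assert (Htri : forall x y z, d x z <= d x y + d y z) by apply (gms_tri _ _ _ HX).
  assert (H0 : forall x, d x x = 0) by (intro x; apply (gms_sep _ _ _ HX); reflexivity).
  split.
  - intros p D _ [HubD _].
    assert (HB : forall i, d (p i) (p (i+1)%Z) <= D) by (intro i; apply HubD; exists i; reflexivity).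
    assert (HT := step _ _ _ HX p D HB).
    destruct (completeness (consec_dists d (schemeT M p))) as [m Hm].
    + exists (D/2). intros r [i ->]. apply HT.
    + exists (d (schemeT M p 0%Z) (schemeT M p (0+1)%Z)). exists 0%Z. reflexivity.
    + exists m. split; [exact Hm|]. apply (proj2 Hm). intros r [i ->]. apply HT.
  - intros p [B HB].
    assert (B0 : 0 <= B) by (apply Rle_trans with (2 := HB 0%Z); auto).
    set (g := fun k t => PG M k (Nat.iter k (schemeT M) p) t).
    assert (G1 : forall k t, d (g (S k) t) (g k t) <= 3 * (B * (/2)^k)).
    { intros k t. unfold g.
      change (Nat.iter (S k) (schemeT M) p) with (schemeT M (Nat.iter k (schemeT M) p)).
      apply (PGstep _ _ _ HX). apply (iter_bound _ _ _ HX). exact HB. }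
    assert (G2 : forall n j t, d (g (n + j)%nat t) (g n t) <= 6 * B * (/2)^n - 6 * B * (/2)^(n+j)).
    { intros n j t. induction j as [|j IH].
      - rewrite Nat.add_0_r, H0. lra.
      - rewrite Nat.add_succ_r.
        assert (T := Htri (g (S (n+j)) t) (g (n+j)%nat t) (g n t)).
        assert (G := G1 (n+j)%nat t).
        replace ((/2)^(S (n+j))) with (/2 * (/2)^(n+j)) by reflexivity.
        nra. }
    assert (G3 : forall n m t, (n <= m)%nat -> d (g m t) (g n t) <= 6 * B * (/2)^n).
    { intros n m t Hnm. replace m with (n + (m - n))%nat by zlia.
      assert (P : 0 <= (/2)^(n + (m-n))) by (apply pow_le; lra).
      specialize (G2 n (m-n)%nat t). nra. }
    assert (Hf : forall t, exists l, forall eps, 0 < eps -> exists N, forall n, (N <= n)%nat -> d (g n t) l < eps).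
    { intro t. apply (gms_complete _ _ _ HX). intros eps He.
      destruct (small B B0 eps He) as [N HN]. exists N. intros m n Hm Hn'.
      destruct (Nat.le_ge_cases n m) as [Hnm|Hnm].
      + eapply Rle_lt_trans; [apply G3; exact Hnm| apply HN; exact Hn'].
      + rewrite Hsym. eapply Rle_lt_trans; [apply G3; exact Hnm| apply HN; exact Hm]. }
    exists (fun t => proj1_sig (constructive_indefinite_description _ (Hf t))).
    intros eps He.
    destruct (small B B0 (eps/2) ltac:(lra)) as [K HK].
    exists K. intros k Hk t.
    destruct (constructive_indefinite_description _ (Hf t)) as [l Hl]. simpl.
    destruct (Hl (eps/2) ltac:(lra)) as [N HN].
    set (m := Nat.max k N).
    assert (A1 := HN m ltac:(zlia)).
    assert (A2 := G3 k m t ltac:(zlia)).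
    assert (A3 := HK k Hk).
    assert (T := Htri (g k t) (g m t) l). rewrite (Hsym (g k t) (g m t)) in T.
    change (d (g k t) l < eps). lra.
Qed.
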